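(* Let $S\subset\mathbb{P}^3$ be a smooth cubic surface defined by a cubic form with real coefficients, and let $U_1,U_2$ be self-adjoint determinantal representations of $S$. Then $U_1$ and $U_2$ are equivalent if and only if $U_1$ is hermitean equivalent to either $U_2$ or $-U_2$.
   Context: Work over $\mathbb{C}$. A determinantal representation of $S$ (defined by $F$) is a $3\times3$ matrix of linear forms $U=z_0U_0+\dots+z_3U_3$, $U_i\in\operatorname{Mat}_3(\mathbb{C})$, with $\det U=cF$, $c\neq 0$; it is self-adjoint if each $U_i$ is Hermitian. Two determinantal representations $M,M'$ are equivalent if $M'=XMY$ for some $X,Y\in\operatorname{GL}_3(\mathbb{C})$. Two self-adjoint representations $U,U'$ are hermitean equivalent if $U'=XUX^{\ast}$ for some $X\in\operatorname{GL}_3(\mathbb{C})$. *)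

(* Defs.v *)
From mathcomp Require Import all_boot all_algebra.
From mathcomp Require Import reals.
From mathcomp.real_closed Require Import complex.
From mathcomp Require Import mpoly.
Set Implicit Arguments. Unset Strict Implicit. Unset Printing Implicit Defensive.
Import GRing.Theory Num.Theory.
Local Open Scope ring_scope.

(* A 3x3 matrix of linear forms z_0 U_0 + ... + z_3 U_3, given by its
   coefficient matrices U : 'I_4 -> 'M[C]_3, as a matrix over C[z_0..z_3]. *)
Definition linmx (C : comRingType) (U : 'I_4 -> 'M[C]_3) : 'M[{mpoly C[4]}]_3 :=
  \matrix_(j, k) \sum_(i < 4) (U i j k)%:MP * 'X_i.

Definition cstmx (C : comRingType) (X : 'M[C]_3) : 'M[{mpoly C[4]}]_3 :=
  map_mx (fun c => c%:MP) X.

Definition adjC (C : numClosedFieldType) (X : 'M[C]_3) : 'M[C]_3 :=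
  (map_mx (@Num.conj C) X)^T.

Definition real_cubic_form (C : numClosedFieldType) (F : {mpoly C[4]}) : Prop :=
  F \is 3.-homog /\ forall m, (F@_m)^* = F@_m.

(* the surface S = V(F) in P^3 is smooth: the partial derivatives of F have
   no common zero in C^4 \ {0} (F itself vanishes there by Euler's formula) *)
Definition smooth_surface (C : numClosedFieldType) (F : {mpoly C[4]}) : Prop :=
  forall v : 'I_4 -> C, (forall i : 'I_4, (mderiv i F).@[v] = 0) -> v = (fun _ => 0).

Definition det_rep (C : comUnitRingType) (F : {mpoly C[4]}) (U : 'I_4 -> 'M[C]_3) : Prop :=
  exists c : C, c != 0 /\ \det (linmx U) = c *: F.

Definition self_adjoint (C : numClosedFieldType) (U : 'I_4 -> 'M[C]_3) : Prop :=
  forall i, adjC (U i) = U i.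

Definition rep_equiv (C : comUnitRingType) (M M' : 'I_4 -> 'M[C]_3) : Prop :=
  exists X Y : 'M[C]_3, X \in unitmx /\ Y \in unitmx /\
    linmx M' = cstmx X *m linmx M *m cstmx Y.

Definition herm_equiv (C : numClosedFieldType) (U U' : 'I_4 -> 'M[C]_3) : Prop :=
  exists X : 'M[C]_3, X \in unitmx /\
    linmx U' = cstmx X *m linmx U *m cstmx (adjC X).

(* Main.v *)
Require Import Defs.
From mathcomp Require Import all_boot all_algebra.
From mathcomp Require Import reals.
From mathcomp.real_closed Require Import complex.
From mathcomp Require Import mpoly.
From mathcomp Require Import zify ring.
Set Implicit Arguments. Unset Strict Implicit. Unset Printing Implicit Defensive.
Import GRing.Theory Num.Theory.
Local Open Scope ring_scope.

Lemma linmx_eval (C : comNzRingType) (U : 'I_4 -> 'M[C]_3) j k (z : 'I_4 -> C) :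
  (linmx U j k).@[z] = \sum_i U i j k * z i.
Proof.
rewrite mxE (big_morph (meval z) (mevalD z) (meval0 z)); apply: eq_bigr => i _.
by rewrite mevalM mevalC mevalXU.
Qed.

Lemma linmx_evald (C : comNzRingType) (U : 'I_4 -> 'M[C]_3) j k i :
  (linmx U j k).@[fun l => (l == i)%:R] = U i j k.
Proof.
rewrite linmx_eval (bigD1 i) // big1 => [|l /negbTE Hl].
  by rewrite eqxx mulr1; apply: addr0.
by rewrite Hl mulr0.
Qed.

Lemma linmx_inj (C : comNzRingType) (U V : 'I_4 -> 'M[C]_3) :
  linmx U = linmx V -> forall i, U i = V i.
Proof.
move=> H i; apply/matrixP => j k.
by rewrite -(linmx_evald U j k i) -(linmx_evald V j k i) H.
Qed.

Lemma linmxE (C : comNzRingType) (U : 'I_4 -> 'M[C]_3) :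
  linmx U = \sum_i 'X_i *: cstmx (U i).
Proof.
apply/matrixP => j k; rewrite mxE summxE; apply: eq_bigr => i _.
by rewrite !mxE mulrC.
Qed.

Lemma cstmxM (C : comNzRingType) (X Y : 'M[C]_3) :
  cstmx (X *m Y) = cstmx X *m cstmx Y.
Proof. exact: (map_mxM (mpolyC 4 (R:=C))). Qed.

Lemma det_cstmx (C : comNzRingType) (X : 'M[C]_3) :
  \det (cstmx X) = (\det X)%:MP.
Proof. exact: (det_map_mx (mpolyC 4 (R:=C))). Qed.

Lemma linmx_mul (C : comNzRingType) (U : 'I_4 -> 'M[C]_3) X Y :
  cstmx X *m linmx U *m cstmx Y = linmx (fun i => X *m U i *m Y).
Proof.
rewrite !linmxE mulmx_sumr mulmx_suml; apply: eq_bigr => i _.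
by rewrite -scalemxAr -scalemxAl !cstmxM.
Qed.

Lemma linmx_tr (C : comNzRingType) (U : 'I_4 -> 'M[C]_3) :
  linmx (fun i => (U i)^T) = (linmx U)^T.
Proof. by apply/matrixP => j k; rewrite !mxE; apply: eq_bigr => i _; rewrite mxE. Qed.

Lemma linmx_opp (C : comNzRingType) (U : 'I_4 -> 'M[C]_3) :
  linmx (fun i => - U i) = - linmx U.
Proof.
apply/matrixP => j k; rewrite !mxE -sumrN; apply: eq_bigr => i _.
by rewrite mxE rmorphN mulNr.
Qed.

Lemma kerN (F : fieldType) m n (A : 'M[F]_(m, n)) :
  (\rank A < m)%N -> exists2 u : 'rV_m, u != 0 & u *m A = 0.
Proof.
move=> H.
have Hk : kermx A != 0 by rewrite -mxrank_eq0 mxrank_ker; lia.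
have /existsP [j Hj] : [exists j, row j (kermx A) != 0].
  apply: contraR Hk => /existsPn Hn; apply/eqP/row_matrixP => j.
  by rewrite row0; apply/eqP; have := Hn j; rewrite negbK.
by exists (row j (kermx A)) => //; rewrite -row_mul mulmx_ker row0.
Qed.


Lemma Lsing (C : numClosedFieldType) (F : {mpoly C[4]}) (V : 'I_4 -> 'M[C]_3) (c : C) :
  c != 0 -> \det (linmx V) = c *: F ->
  (forall i (k : 'I_3), k != 0 -> V i 0 k = 0) ->
  smooth_surface F -> False.
Proof.
move=> cnz Hdet HV Hsm.
set E := linmx V.
have E0k : forall k : 'I_3, k != 0 -> E 0 k = 0.
  move=> k kn0; rewrite mxE big1 // => i _.
  by rewrite HV // mpolyC0 mul0r.
have Hdet2 : \det E = E 0 0 * cofactor E 0 0.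
  rewrite (expand_det_row _ 0) big_ord_recl big1 ?addr0 // => j _.
  by rewrite E0k ?mul0r // eq_sym; apply: neq_lift.
pose K : 'M[C]_(4, 3) := \matrix_(i, k) (if k == 0 then V i 0 0 else V i 1 k).
have [z znz Hz] : exists2 z : 'rV_4, z != 0 & z *m K = 0.
  by apply: kerN; have := rank_leq_col K; lia.
pose v := fun i => z 0 i.
have Hl : (E 0 0).@[v] = 0.
  rewrite linmx_eval.
  transitivity ((z *m K) 0 0); last by rewrite Hz mxE.
  by rewrite mxE; apply: eq_bigr => i _; rewrite mxE eqxx mulrC.
have H1 : forall k : 'I_3, k != 0 -> (E 1 k).@[v] = 0.
  move=> k kn0; rewrite linmx_eval.
  transitivity ((z *m K) 0 k); last by rewrite Hz mxE.
  by rewrite mxE; apply: eq_bigr => i _; rewrite mxE (negbTE kn0) mulrC.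
have HG : (cofactor E 0 0).@[v] = 0.
  rewrite /cofactor mevalM.
  have Hdm : forall M : 'M[{mpoly C[4]}]_2, (\det M).@[v] = \det (map_mx (meval v) M).
    by move=> M; rewrite (det_map_mx (meval v)).
  rewrite Hdm (expand_det_row _ 0) big1 ?mulr0 // => j _.
  rewrite !mxE (_ : lift 0 0 = 1 :> 'I_3); last by apply/val_inj.
  have := H1 (lift 0 j); rewrite /E mxE => ->; first by rewrite mul0r.
  by rewrite eq_sym neq_lift.
have Hv : forall i, (mderiv i F).@[v] = 0.
  move=> i.
  have -> : F = c^-1 *: (E 0 0 * cofactor E 0 0).
    by rewrite -Hdet2 /E Hdet scalerA mulVf // scale1r.
  rewrite mderivZ mderivM mevalZ mevalD [X in _ * (X + _)]mevalM [X in _ * (_ + X)]mevalM HG Hl.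
  by rewrite mulr0 mul0r addr0 mulr0.
have := Hsm v Hv => Hv0.
move/eqP: znz; apply; apply/rowP => i.
by rewrite mxE; have := congr1 (fun f => f i) Hv0.
Qed.



Lemma ext (F : fieldType) n (u : 'rV[F]_n.+1) :
  exists P : 'M[F]_n.+1, P \in unitmx /\ exists a, u = a *: row 0 P.
Proof.
exists (row_ebase u); split; first exact: row_ebase_unit.
exists ((col_ebase u) 0 0 * (0 < \rank u)%:R); apply/rowP => k.
rewrite -{1}(mulmx_ebase u) !mxE (bigD1 0) //= big1 ?addr0.
  by rewrite !mxE big_ord1 !mxE /=.
move=> b bn0; rewrite !mxE big_ord1 !mxE.
by rewrite (_ : (0 == b :> nat) = false) ?mulr0 ?mul0r //; apply/negbTE; rewrite eq_sym.
Qed.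

Lemma L1 (C : numClosedFieldType) (F : {mpoly C[4]}) (U : 'I_4 -> 'M[C]_3) :
  smooth_surface F -> det_rep F U ->
  forall (u w : 'rV_3) (t : 'I_4 -> C), u != 0 ->
  (forall i, u *m U i = t i *: w) -> False.
Proof.
move=> Hsm [c [cnz Hdet]] u w t unz Hu.
have [P [Pu [a Ha]]] := ext u.
have [Pw [Pwu [b Hb]]] := ext w.
have anz : a != 0 by apply: contraNneq unz => a0; rewrite Ha a0 scale0r.
pose V i := P *m U i *m invmx Pw.
apply: (@Lsing C F V (\det P * c * \det (invmx Pw))).
- by rewrite !mulf_neq0 // -unitfE -unitmxE ?unitmx_inv.
- rewrite /V -linmx_mul !det_mulmx !det_cstmx Hdet mulrC !mul_mpolyC !scalerA.
  by rewrite -mulrA mulrC.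
- move=> i k kn0.
  transitivity ((row 0 (V i)) 0 k); first by rewrite [in RHS]mxE.
  have HP : row 0 P = a^-1 *: u by rewrite Ha scalerA mulVf // scale1r.
  rewrite /V !row_mul HP -!scalemxAl Hu -scalemxAl Hb -scalemxAl.
  rewrite -row_mul mulmxV //.
  by rewrite !mxE eq_sym (negbTE kn0) !mulr0.
- exact: Hsm.
Qed.


Lemma my_nz_row (F : fieldType) m n (A : 'M[F]_(m, n)) :
  A != 0 -> exists j, row j A != 0.
Proof.
move=> Anz.
have /existsP [j Hj] : [exists j, row j A != 0].
  apply: contraR Anz => /existsPn Hn; apply/eqP/row_matrixP => j.
  by rewrite row0; apply/eqP; have := Hn j; rewrite negbK.
by exists j.
Qed.

Lemma R1 (F : fieldType) m n (A : 'M[F]_(m, n)) :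
  (\rank A <= 1)%N -> exists w : 'rV_n, exists t : 'I_m -> F,
    forall j, row j A = t j *: w.
Proof.
move=> H; case: (eqVneq A 0) => [->|Anz].
  by exists 0, (fun _ => 0) => j; rewrite row0 scaler0.
have [j0 Hj0] := my_nz_row Anz.
have sA : (A <= row j0 A)%MS.
  rewrite -(mxrank_leqif_sup (row_sub j0 A)).2 rank_rV Hj0.
  have : (\rank A != 0)%N by rewrite mxrank_eq0.
  move: H; rewrite eqn_leq; case: (\rank A) => [|[|k]] //.
exists (row j0 A), (fun j => (row j A *m pinvmx (row j0 A)) 0 0) => j.
have sj : (row j A <= row j0 A)%MS := submx_trans (row_sub j A) sA.
by rewrite -{1}(mulmxKpV sj) {1}[row j A *m _]mx11_scalar mul_scalar_mx.
Qed.

Lemma half_rank (C : numClosedFieldType) (F : {mpoly C[4]}) (U : 'I_4 -> 'M[C]_3) N M :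
  smooth_surface F -> det_rep F U -> (forall i, N *m U i = U i *m M) ->
  forall u : 'rV_3, u != 0 -> u *m N = 0 -> (\rank M <= 1)%N.
Proof.
move=> Hsm Hrep HNM u unz uN.
pose W : 'M_(4,3) := \matrix_i (u *m U i).
have WM : W *m M = 0.
  apply/row_matrixP => i.
  by rewrite row_mul rowK row0 -mulmxA -HNM mulmxA uN mul0mx.
have sW : (W <= kermx M)%MS by apply/sub_kermxP.
have r1 := mxrankS sW; rewrite mxrank_ker in r1.
have r2 : (1 < \rank W)%N.
  rewrite ltnNge; apply/negP => /R1 [w [t Ht]].
  by apply: (L1 Hsm Hrep (t := t) (w := w) unz) => i; rewrite -Ht rowK.
lia.
Qed.


Lemma key (C : numClosedFieldType) (F : {mpoly C[4]}) (U : 'I_4 -> 'M[C]_3) A B :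
  smooth_surface F -> det_rep F U -> (forall i, A *m U i = U i *m B) ->
  exists l, A = l%:M.
Proof.
move=> Hsm Hrep HAB.
have [l Hl] : exists l, eigenvalue A l.
  have /closed_rootP [l Hl] : size (char_poly A) != 1%N by rewrite size_char_poly.
  by exists l; rewrite eigenvalue_root_char.
case/eigenvalueP: Hl => v Hv vnz.
exists l; apply/eqP; rewrite -subr_eq0; apply/negPn/negP => Nnz.
set N := A - l%:M in Nnz; pose M := B - l%:M.
have HNM : forall i, N *m U i = U i *m M.
  by move=> i; rewrite /N /M mulmxBl mulmxBr HAB mul_scalar_mx mul_mx_scalar.
have vN : v *m N = 0 by rewrite /N mulmxBr Hv mul_mx_scalar subrr.
clearbody N M.
have rM := half_rank Hsm Hrep HNM vnz vN.
have Mnz : M != 0.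
  apply/negP => /eqP M0.
  have [j Hj] := my_nz_row Nnz.
  apply: (L1 Hsm Hrep (w := 0) (t := fun _ => 0) Hj) => i.
  by rewrite -row_mul HNM M0 mulmx0 row0 scale0r.
pose UT i := (U i)^T.
have HrepT : det_rep F UT.
  by case: Hrep => c [cnz Hc]; exists c; split => //; rewrite linmx_tr det_tr.
have HT : forall i, M^T *m UT i = UT i *m N^T by move=> i; rewrite /UT -!trmx_mul HNM.
have [u unz uM] : exists2 u : 'rV_3, u != 0 & u *m M^T = 0.
  by apply: kerN; rewrite mxrank_tr; lia.
have rN := half_rank Hsm HrepT HT unz uM; rewrite mxrank_tr in rN.
have [b [a Hab]] := R1 rN.
have [d [cc Hcd]] := R1 rM.
have Nab : forall j k, N j k = a j * b 0 k.
  by move=> j k; have := congr1 (fun r : 'rV_3 => r 0 k) (Hab j); rewrite !mxE.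
have Mcd : forall j k, M j k = cc j * d 0 k.
  by move=> j k; have := congr1 (fun r : 'rV_3 => r 0 k) (Hcd j); rewrite !mxE.
have /existsP [j1 /existsP [k0 Hjk]] : [exists j, exists k, M j k != 0].
  apply: contraR Mnz => /existsPn Hn; apply/eqP/matrixP => j k; rewrite mxE.
  by apply/eqP; have /existsPn := Hn j; move/(_ k); rewrite negbK.
rewrite Mcd in Hjk.
have c1nz : cc j1 != 0 by apply: contraNneq Hjk => ->; rewrite mul0r.
have dnz : d 0 k0 != 0 by apply: contraNneq Hjk => ->; rewrite mulr0.
pose ccol : 'cV_3 := \col_j cc j; pose acol : 'cV_3 := \col_j a j.
apply: (L1 Hsm HrepT (u := ccol^T) (w := acol^T)
          (t := fun i => (d 0 k0)^-1 * (b *m U i) 0 k0)).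
  apply/eqP => /(congr1 (fun r : 'rV_3 => r 0 j1)); rewrite !mxE.
  by apply/eqP.
move=> i; rewrite /UT -trmx_mul -linearZ /=; congr trmx.
apply/matrixP => j z; rewrite !mxE.
have E1 : a j * (\sum_l b 0 l * U i l k0) = (\sum_l U i j l * cc l) * d 0 k0.
  have := congr1 (fun X : 'M_3 => X j k0) (HNM i); rewrite !mxE => E.
  transitivity (\sum_l N j l * U i l k0).
    by rewrite mulr_sumr; apply: eq_bigr => q _; rewrite Nab mulrA.
  by rewrite E mulr_suml; apply: eq_bigr => q _; rewrite Mcd mulrA.
have -> : \sum_l U i j l * ccol l z = \sum_l U i j l * cc l.
  by apply: eq_bigr => q _; rewrite mxE.
apply: (mulIf dnz); rewrite -E1.
field; exact: dnz.
Qed.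


Lemma adjC_mul (C : numClosedFieldType) (A B : 'M[C]_3) :
  adjC (A *m B) = adjC B *m adjC A.
Proof.
apply/matrixP => i j; rewrite !mxE rmorph_sum; apply: eq_bigr => k _.
by rewrite !mxE rmorphM mulrC.
Qed.

Lemma adjCK (C : numClosedFieldType) (A : 'M[C]_3) : adjC (adjC A) = A.
Proof. by apply/matrixP => i j; rewrite !mxE conjCK. Qed.

Lemma adjCZ (C : numClosedFieldType) a (A : 'M[C]_3) : adjC (a *: A) = a^* *: adjC A.
Proof. by apply/matrixP => i j; rewrite !mxE rmorphM. Qed.

Lemma adjCN (C : numClosedFieldType) (A : 'M[C]_3) : adjC (- A) = - adjC A.
Proof. by apply/matrixP => i j; rewrite !mxE rmorphN. Qed.

Lemma adjC1 (C : numClosedFieldType) : adjC (1%:M : 'M[C]_3) = 1%:M.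
Proof. by apply/matrixP => i j; rewrite !mxE eq_sym rmorph_nat. Qed.

Lemma adjC_unit (C : numClosedFieldType) (X : 'M[C]_3) :
  X \in unitmx -> adjC X \in unitmx.
Proof.
move=> Xu; have /mulmx1_unit [] // : adjC X *m adjC (invmx X) = 1%:M.
by rewrite -adjC_mul mulVmx // adjC1.
Qed.

Lemma adjC_inv (C : numClosedFieldType) (X : 'M[C]_3) :
  X \in unitmx -> adjC X *m adjC (invmx X) = 1%:M.
Proof. by move=> Xu; rewrite -adjC_mul mulVmx // adjC1. Qed.

Lemma linmx_ext (C : comNzRingType) (U V : 'I_4 -> 'M[C]_3) :
  (forall i, U i = V i) -> linmx U = linmx V.
Proof. by move=> H; rewrite !linmxE; apply: eq_bigr => i _; rewrite H. Qed.

Lemma unitmxN' (C : fieldType) (X : 'M[C]_3) : X \in unitmx -> - X \in unitmx.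
Proof.
move=> Xu; have /mulmx1_unit [] // : (- X) *m (- invmx X) = 1%:M.
by rewrite mulNmx mulmxN opprK mulmxV.
Qed.


Lemma forward (C : numClosedFieldType) (F : {mpoly C[4]}) (U1 U2 : 'I_4 -> 'M[C]_3) :
  smooth_surface F ->
  det_rep F U1 -> self_adjoint U1 ->
  det_rep F U2 -> self_adjoint U2 ->
  rep_equiv U1 U2 ->
   (herm_equiv U2 U1 \/ herm_equiv (fun k => - U2 k) U1).
Proof.
move=> Hsm Hr1 sa1 Hr2 sa2 [X [Y [Xu [Yu HXY]]]].
rewrite linmx_mul in HXY; have H2 := linmx_inj HXY.
have Ysu := adjC_unit Yu.
have E i : X *m U1 i *m Y = adjC Y *m U1 i *m adjC X.
  by rewrite -H2 -{1}(sa2 i) H2 !adjC_mul sa1 mulmxA.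
have HA : forall i, (invmx (adjC Y) *m X) *m U1 i = U1 i *m (adjC X *m invmx Y).
  move=> i; rewrite -[U1 i *m _]mul1mx -(mulVmx Ysu) -!mulmxA; congr (_ *m _).
  by rewrite !mulmxA -E -[X *m U1 i *m Y *m _]mulmxA mulmxV // mulmx1.
have [l Hl] := key Hsm Hr1 HA.
have HX : X = l *: adjC Y.
  by rewrite -[X]mul1mx -(mulmxV Ysu) -mulmxA Hl mul_mx_scalar.
have lnz : l != 0.
  apply: contraTneq Xu => l0; rewrite HX l0 scale0r unitmxE det0 unitr0 //.
have HY : Y = (l^*)^-1 *: adjC X.
  by rewrite HX adjCZ adjCK scalerA mulVf ?scale1r // conjC_eq0.
set mu := (l^*)^-1.
pose K i := X *m U1 i *m adjC X.
have HU2 : forall i, U2 i = mu *: K i.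
  by move=> i; rewrite H2 HY -scalemxAr.
have HK : forall i, adjC (K i) = K i.
  by move=> i; rewrite /K !adjC_mul adjCK sa1 mulmxA.
have [i0 Ki0] : exists i, K i != 0.
  case: (boolP [exists i, K i != 0]) => [/existsP //|/existsPn Hn].
    exfalso; apply: (L1 Hsm Hr2 (u := delta_mx 0 0) (w := 0) (t := fun _ => 0)).
      by apply/eqP => /(congr1 (fun r : 'rV_3 => r 0 0)); rewrite !mxE eqxx; apply/eqP; exact: oner_neq0.
    move=> i; have := Hn i; rewrite negbK => /eqP Ki.
    by rewrite HU2 Ki scaler0 mulmx0 scale0r.
have mur : mu^* = mu.
  have := sa2 i0; rewrite HU2 adjCZ HK => /eqP; rewrite -subr_eq0 -scalerBl scalemx_eq0.
  by rewrite (negbTE Ki0) orbF subr_eq0 => /eqP.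
have munz : mu != 0 by rewrite invr_eq0 conjC_eq0.
set nu := mu^-1.
have nur : nu^* = nu.
  by rewrite /nu fmorphV /=; congr (_^-1).
have nunz : nu != 0 by rewrite invr_eq0.
have HU1 : forall i, U1 i = nu *: (invmx X *m U2 i *m adjC (invmx X)).
  move=> i; rewrite HU2 -scalemxAr -scalemxAl scalerA mulVf // scale1r.
  by rewrite /K !mulmxA mulVmx // mul1mx -mulmxA adjC_inv // mulmx1.
have : nu \is Num.real by rewrite CrealE nur.
rewrite realE => /orP [nupos | nuneg].
- left; set s := sqrtC nu.
  have sr : s^* = s by apply: geC0_conj; rewrite sqrtC_ge0.
  have ss : s * s = nu by rewrite -expr2 sqrtCK.
  have snz : s != 0 by apply: contraNneq nunz => s0; rewrite -ss s0 mul0r.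
  exists (s *: invmx X); split.
    by rewrite unitmxZ ?unitfE // unitmx_inv.
  rewrite linmx_mul; apply: linmx_ext => i.
  by rewrite HU1 adjCZ sr -scalemxAr -!scalemxAl scalerA ss.
- right; set s := sqrtC (- nu).
  have sr : s^* = s by apply: geC0_conj; rewrite sqrtC_ge0 oppr_ge0.
  have ss : s * s = - nu by rewrite -expr2 sqrtCK.
  have snz : s != 0.
    by apply: contraNneq nunz => s0; rewrite -[nu]opprK -ss s0 mul0r oppr0.
  exists (s *: invmx X); split.
    by rewrite unitmxZ ?unitfE // unitmx_inv.
  rewrite linmx_mul; apply: linmx_ext => i.
  rewrite HU1 adjCZ sr -scalemxAr -!scalemxAl scalerA ss mulmxN mulNmx.
  by rewrite scaleNr scalerN opprK.
Qed.

Unset Implicit Arguments.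

Theorem mainTheorem11 (R : realType) (F : {mpoly R[i][4]})
  (U1 U2 : 'I_4 -> 'M[R[i]]_3) :
  real_cubic_form F -> smooth_surface F ->
  det_rep F U1 -> self_adjoint U1 ->
  det_rep F U2 -> self_adjoint U2 ->
  (rep_equiv U1 U2 <->
   (herm_equiv U2 U1 \/ herm_equiv (fun k => - U2 k) U1)).
Proof.
move=> _ Hsm Hr1 sa1 Hr2 sa2; split; first exact: (forward Hsm Hr1 sa1 Hr2 sa2).
case=> [[X [Xu H]]|[X [Xu H]]]; rewrite linmx_mul in H; have H' := linmx_inj H.
- exists (invmx X), (invmx (adjC X)); split; first by rewrite unitmx_inv.
  split; first by rewrite unitmx_inv adjC_unit.
  rewrite linmx_mul; apply: linmx_ext => i.
  rewrite H' !mulmxA mulVmx // mul1mx -mulmxA mulmxV ?mulmx1 //.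
  exact: adjC_unit.
- exists (invmx X), (- invmx (adjC X)); split; first by rewrite unitmx_inv.
  split; first by apply: unitmxN'; rewrite unitmx_inv adjC_unit.
  rewrite linmx_mul; apply: linmx_ext => i.
  rewrite H' !mulmxA mulVmx // mul1mx -mulmxA mulmxN mulmxV.
    by rewrite mulmxN mulmx1 opprK.
  exact: adjC_unit.
Qed.
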